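(* Let $q\ge 7$ be a prime power and let $C$ be an independent set of the Kneser graph of flags of type $\{2,3\}$ of $\mathrm{PG}(6,q)$ such that every plane and every solid of $\mathrm{PG}(6,q)$ is contained in at most $q+1$ flags of $C$. Then $$|C|\le 24q^{10}+79q^9+155q^8+210q^7+216q^6+187q^5+140q^4+93q^3+51q^2+22q+5.$$
   Context: Dimensions are projective (planes 2, solids 3). A flag of type $\{2,3\}$ is a pair $(E,S)$ of a plane $E$ and a solid $S$ with $E\subseteq S$; the Kneser graph has these flags as vertices, distinct flags $(E,S),(E',S')$ being adjacent iff $E\cap S'=\emptyset$ and $E'\cap S=\emptyset$. An independent set is a set of pairwise non-adjacent vertices. *)

(* Defs.v *)
From HB Require Import structures.
From mathcomp Require Import all_boot all_order all_algebra all_field.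
Set Implicit Arguments. Unset Strict Implicit. Unset Printing Implicit Defensive.
Import GRing.Theory.
Import VectorInternalTheory.

(* Subspaces of a finite-dimensional vector space over a finite field form a
   finite type (they are a subtype of a finite type of matrices). *)
HB.instance Definition _ (F : finFieldType) (vT : vectType F) :=
  [Finite of {vspace vT} by <:].

(* PG(6,q) is the lattice of subspaces of F^7 with #|F| = q.
   Projective dimension d  <->  vector dimension d+1. *)
Definition PGpoint (F : finFieldType) := 'rV[F]_7.
Definition PGsub (F : finFieldType) := {vspace 'rV[F]_7}.

Definition is_plane (F : finFieldType) (E : PGsub F) := \dim E == 3%N.
Definition is_solid (F : finFieldType) (S : PGsub F) := \dim S == 4%N.

Definition is_flag23 (F : finFieldType) (f : PGsub F * PGsub F) :=
  [&& is_plane f.1, is_solid f.2 & (f.1 <= f.2)%VS].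

(* Kneser-graph adjacency: distinct flags with E ∩ S' = ∅ and E' ∩ S = ∅
   (projectively empty = zero vector subspace) *)
Definition kneser_adj (F : finFieldType) (f g : PGsub F * PGsub F) :=
  [&& f != g, (f.1 :&: g.2)%VS == 0%VS & (g.1 :&: f.2)%VS == 0%VS].

Definition kneser_independent (F : finFieldType) (C : {set PGsub F * PGsub F}) :=
  {subset C <= is_flag23 (F:=F)} /\
  forall f g, f \in C -> g \in C -> ~~ kneser_adj f g.

(* Main.v *)
Require Import Defs.
From mathcomp Require Import all_boot all_order all_algebra all_field.
From HB Require Import structures.
From mathcomp Require Import zify ring lra.
Set Implicit Arguments. Unset Strict Implicit. Unset Printing Implicit Defensive.
Import GRing.Theory.

Lemma dcount (T1 T2 : finType) (R : T1 -> T2 -> bool) :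
  \sum_a #|[set b | R a b]| = \sum_b #|[set a | R a b]|.
Proof.
have E1 a : #|[set b | R a b]| = \sum_b (R a b : nat).
  by rewrite -sum1dep_card big_mkcond /=; apply: eq_bigr => b _; case: (R a b).
have E2 b : #|[set a | R a b]| = \sum_a (R a b : nat).
  by rewrite -sum1dep_card big_mkcond /=; apply: eq_bigr => a _; case: (R a b).
under eq_bigr do rewrite E1.
under [RHS]eq_bigr do rewrite E2.
exact: exchange_big.
Qed.

Section Basic.
Variable F : finFieldType.
Local Notation V := 'rV[F]_7.
Local Notation sub := {vspace V}.
Local Notation q := #|F|.

Lemma q_gt1 : 1 < q. Proof. exact: finNzRing_gt1. Qed.
Lemma q_gt0 : 0 < q. Proof. exact: ltnW q_gt1. Qed.

Lemma dimV : \dim (fullv : sub) = 7.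
Proof. by rewrite dimvf. Qed.

Lemma dim_le7 (U : sub) : \dim U <= 7.
Proof. by apply: leq_trans (dimvS (subvf U)) _; rewrite dimV. Qed.

Lemma card_vs (U : sub) : #|U| = q ^ \dim U.
Proof. exact: card_vspace. Qed.

Lemma card_diff (P W : sub) : (P <= W)%VS ->
  #|[set x : V | (x \in W) && (x \notin P)]| = q ^ \dim W - q ^ \dim P.
Proof.
move=> sPW; rewrite -!card_vs.
have -> : [set x : V | (x \in W) && (x \notin P)] = [set x in W] :\: [set x in P].
  by apply/setP=> x; rewrite !inE andbC.
rewrite cardsD.
have -> : [set x in W] :&: [set x in P] = [set x in P].
  apply/setP=> x; rewrite !inE; apply/andb_idl => /(subvP sPW) //.
by rewrite !cardsE.
Qed.

Lemma dim_add1 (U : sub) (w : V) : w \notin U -> \dim (U + <[w]>)%VS = (\dim U).+1.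
Proof.
move=> wU.
have w0 : (w != 0)%R by apply: contra wU => /eqP ->; rewrite mem0v.
rewrite dimv_disjoint_sum ?dim_vline ?w0 ?addn1 //.
apply/eqP; rewrite -subv0; apply/subvP => x /memv_capP [xU /vlineP [k xk]].
rewrite memv0; case: (eqVneq k 0%R) => [k0|nk]; first by rewrite xk k0 scale0r.
case/negP: wU; have -> : w = (k^-1 *: x)%R by rewrite xk scalerA mulVf ?scale1r.
by rewrite memvZ.
Qed.

Lemma count_sup (K : sub) (e m : nat) : forall U : sub, (U <= K)%VS ->
  \dim K = \dim U + m + e ->
  #|[set W : sub | [&& \dim W == \dim U + m, (U <= W)%VS & (W <= K)%VS]]|
     * \prod_(j < m) (q ^ j.+1 - 1)
   <= \prod_(j < m) (q ^ (e + j.+1) - 1).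
Proof.
elim: m => [|m IH] U sUK dK.
  rewrite !big_ord0 !muln1; apply: (@leq_trans #|[set U]|); last by rewrite cards1.
  apply: subset_leq_card.
  apply/subsetP => W; rewrite !inE addn0 => /and3P [/eqP dW sUW _].
  by rewrite eq_sym eqEdim sUW dW leqnn.
set S := [set W : sub | _].
set dU := \dim U.
have Hcnt : \sum_(W : sub) #|[set w : V | (W \in S) && (w \in W) && (w \notin U)]|
            = #|S| * (q ^ dU * (q ^ m.+1 - 1)).
  rewrite (bigID (fun W => W \in S)) /= [X in _ + X]big1 ?addn0; last first.
    move=> W /negbTE WS; apply/eqP; rewrite cards_eq0; apply/eqP/setP => w.
    by rewrite in_set in_set0 WS.
  rewrite -sum_nat_const; apply: eq_bigr => W WS.
  move: (WS); rewrite inE => /and3P [/eqP dW sUW _].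
  have -> : q ^ dU * (q ^ m.+1 - 1) = q ^ \dim W - q ^ dU.
    by rewrite dW expnD mulnBr muln1.
  rewrite -(card_diff sUW).
  by apply: eq_card => w; rewrite !in_set; move: WS; rewrite in_set => ->.
have Hle : forall w : V,
   #|[set W : sub | (W \in S) && (w \in W) && (w \notin U)]| * \prod_(j < m) (q ^ j.+1 - 1)
   <= ((w \in K) && (w \notin U)) * \prod_(j < m) (q ^ (e + j.+1) - 1).
  move=> w; case: (boolP ((w \in K) && (w \notin U))) => [/andP [wK wU]|H]; last first.
    rewrite mul0n leqn0 muln_eq0; apply/orP; left; rewrite cards_eq0; apply/eqP/setP => W.
    rewrite !inE; apply/negP => /andP [/andP [/and3P [_ _ sWK] wW] wU]; case/negP: H.
    by rewrite wU andbT (subvP sWK).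
  rewrite mul1n.
  have sUwK : (U + <[w]> <= K)%VS by rewrite subv_add sUK -memvE.
  have dUw := dim_add1 wU.
  have dK2 : \dim K = \dim (U + <[w]>)%VS + m + e by rewrite dUw dK addnS addSn.
  apply: leq_trans _ (IH _ sUwK dK2).
  rewrite leq_mul2r; apply/orP; right; apply: subset_leq_card; apply/subsetP => W.
  rewrite !inE => /andP [/andP [/and3P [/eqP dW sUW sWK] wW] _].
  by rewrite dUw dW addSnnS eqxx subv_add sUW -memvE wW sWK.
have Hsum := dcount (fun (W : sub) (w : V) => (W \in S) && (w \in W) && (w \notin U)).
rewrite Hcnt in Hsum.
have H2 : #|S| * (q ^ dU * (q ^ m.+1 - 1)) * \prod_(j < m) (q ^ j.+1 - 1)
     <= q ^ dU * (q ^ (m.+1 + e) - 1) * \prod_(j < m) (q ^ (e + j.+1) - 1).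
  rewrite Hsum big_distrl /=.
  apply: (@leq_trans (\sum_w ((w \in K) && (w \notin U)) * \prod_(j < m) (q ^ (e + j.+1) - 1))).
    by apply: leq_sum => w _; exact: Hle.
  rewrite -big_distrl /= leq_mul2r; apply/orP; right.
  rewrite (_ : \sum_w ((w \in K) && (w \notin U) : nat) = #|[set w : V | (w \in K) && (w \notin U)]|).
    by rewrite card_diff // dK -addnA expnD mulnBr muln1 addnC.
  by rewrite -sum1dep_card [RHS]big_mkcond /=; apply: eq_bigr => w _; case: (_ && _).
rewrite big_ord_recr /= [X in _ <= X]big_ord_recr /=.
move: H2; rewrite (addnC m.+1 e).
have Q0 : 0 < q ^ dU by rewrite expn_gt0 q_gt0.
move: (q ^ dU) Q0 => Q Q0.
move: (\prod_(j < m) (q ^ j.+1 - 1)) => A.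
move: (\prod_(j < m) (q ^ (e + j.+1) - 1)) => B.
move: (q ^ m.+1 - 1) (q ^ (e + m.+1) - 1) #|S| => a b s H.
rewrite -(@leq_pmul2l Q) //.
move: H; nia.
Qed.

End Basic.

Lemma dcount_le (T1 T2 : finType) (A : {set T1}) (R : T1 -> T2 -> bool) c (f : T2 -> nat) :
  (forall a, a \in A -> c <= #|[set b | R a b]|) ->
  (forall b, #|[set a | (a \in A) && R a b]| <= f b) ->
  #|A| * c <= \sum_b f b.
Proof.
move=> H1 H2; rewrite -sum_nat_const.
apply: (@leq_trans (\sum_a #|[set b | (a \in A) && R a b]|)).
  rewrite [X in _ <= X](bigID (fun a => a \in A)) /=; apply: leq_trans (leq_addr _ _).
  apply: leq_sum => a aA; apply: leq_trans (H1 a aA) _.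
  by apply: subset_leq_card; apply/subsetP => b; rewrite !inE aA.
rewrite (dcount (fun a b => (a \in A) && R a b)); exact: leq_sum.
Qed.

Lemma sum_cond_const (T : finType) (P : pred T) M :
  \sum_b (P b) * M = #|[set b | P b]| * M.
Proof.
rewrite -sum1dep_card big_distrl /= [RHS]big_mkcond /=; apply: eq_bigr => b _.
by case: (P b); rewrite ?mul1n ?mul0n.
Qed.

Section Meet.
Variable F : finFieldType.
Local Notation V := 'rV[F]_7.
Local Notation sub := {vspace V}.
Local Notation q := #|F|.

Lemma dim_lt_of_not_sub (P X : sub) : (P <= X)%VS -> ~~ (X <= P)%VS -> \dim P < \dim X.
Proof.
move=> sPX nXP; have := dimv_leqif_sup sPX; rewrite (negbTE nXP) => /leqifP.
by [].
Qed.

Lemma card_diff_ge (P X : sub) d : (P <= X)%VS -> ~~ (X <= P)%VS -> \dim P = d ->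
  q ^ d.+1 - q ^ d <= #|[set x : V | (x \in X) && (x \notin P)]|.
Proof.
move=> sPX nXP dP; rewrite card_diff // dP; apply: leq_sub2r.
rewrite leq_exp2l ?q_gt1 //; rewrite -dP; exact: dim_lt_of_not_sub.
Qed.

Lemma meet2P (K P A B : sub) (k d M1 M2 : nat) :
  (P <= A)%VS -> (P <= B)%VS -> \dim P = d ->
  (forall U : sub, \dim U = d.+1 ->
     #|[set W : sub | [&& \dim W == k, (U <= W)%VS & (W <= K)%VS]]| <= M1) ->
  (forall U : sub, \dim U = d.+2 ->
     #|[set W : sub | [&& \dim W == k, (U <= W)%VS & (W <= K)%VS]]| <= M2) ->
  #|[set W : sub | [&& \dim W == k, (P <= W)%VS, (W <= K)%VS,
                      ~~ (W :&: A <= P)%VS & ~~ (W :&: B <= P)%VS]]| * (q ^ d.+1 - q ^ d) ^ 2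
   <= (q ^ \dim (A :&: B) - q ^ d) * (q ^ d.+1 - q ^ d) * M1
      + (q ^ \dim A - q ^ d) * (q ^ \dim B - q ^ d) * M2.
Proof.
move=> sPA sPB dP HM1 HM2.
set S := [set W : sub | _].
set X := [set W : sub | (W :&: (A :&: B) <= P)%VS].
set c := q ^ d.+1 - q ^ d.
have sPAB : (P <= A :&: B)%VS by rewrite subv_cap sPA sPB.
have H1 : #|S :\: X| * c <= (q ^ \dim (A :&: B) - q ^ d) * M1.
  rewrite -dP -card_diff // -[X in _ <= X]sum_cond_const.
  apply: (dcount_le (R := fun W (x : V) => (x \in W :&: (A :&: B))%VS && (x \notin P))
                     (f := fun x => ((x \in (A :&: B)%VS) && (x \notin P)) * M1)).
    move=> W; rewrite !inE => /andP [nX /and5P [_ sPW _ _ _]].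
    apply: card_diff_ge => //; by rewrite subv_cap sPW.
  move=> x; case: (boolP ((x \in A :&: B)%VS && (x \notin P))) => [/andP [xAB xP]|H]; last first.
    rewrite mul0n leqn0 cards_eq0; apply/eqP/setP => W; rewrite !inE.
    apply/negP => /andP [_ /andP [/memv_capP [_ xAB] xP]]; case/negP: H; by rewrite xAB xP.
  rewrite mul1n; apply: leq_trans (HM1 (P + <[x]>)%VS _); last by rewrite dim_add1 // dP.
  apply: subset_leq_card; apply/subsetP => W; rewrite !inE.
  move=> /andP [/andP [_ /and5P [dW sPW sWK _ _]] /andP [/memv_capP [xW _] _]].
  by rewrite dW subv_add sPW -memvE xW sWK.
have H2 : #|S :&: X| * c ^ 2 <= (q ^ \dim A - q ^ d) * (q ^ \dim B - q ^ d) * M2.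
  have -> : (q ^ \dim A - q ^ d) * (q ^ \dim B - q ^ d)
     = #|setX [set x : V | (x \in A) && (x \notin P)] [set y : V | (y \in B) && (y \notin P)]|.
    by rewrite cardsX !card_diff // dP.
  set XA := [set x : V | (x \in A) && (x \notin P)].
  set XB := [set y : V | (y \in B) && (y \notin P)].
  apply: (@leq_trans (\sum_(p : V * V) (p \in setX XA XB) * M2)); last first.
    rewrite sum_cond_const; apply: eq_leq; congr (_ * _); apply: eq_card => p; by rewrite inE.
  apply: (dcount_le (R := fun W (p : V * V) => [&& (p.1 \in W :&: A)%VS, (p.1 \notin P),
                                                   (p.2 \in W :&: B)%VS & (p.2 \notin P)])
    (f := fun p => (p \in setX XA XB) * M2)).
    move=> W; rewrite !inE => /andP [/and5P [_ sPW _ nA nB] _].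
    have -> : [set p : V * V | [&& (p.1 \in W :&: A)%VS, p.1 \notin P,
                  (p.2 \in W :&: B)%VS & p.2 \notin P]]
       = setX [set x : V | (x \in W :&: A)%VS && (x \notin P)]
              [set y : V | (y \in W :&: B)%VS && (y \notin P)].
      by apply/setP => -[x y]; rewrite !inE /= !andbA.
    rewrite cardsX expnS expn1; apply: leq_mul; apply: card_diff_ge => //;
      by rewrite subv_cap sPW.
  move=> [x y]; rewrite inE /=.
  case: (boolP ((x \in XA) && (y \in XB))) => [|H]; last first.
    rewrite mul0n leqn0 cards_eq0; apply/eqP/setP => W; rewrite !inE /=.
    apply/negP => /andP [_ /and4P [/memv_capP [_ xA] xP /memv_capP [_ yB] yP]].
    by case/negP: H; rewrite !inE xA xP yB yP.
  rewrite !inE => /andP [/andP [xA xP] /andP [yB yP]]; rewrite mul1n.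
  case: (set_0Vmem [set W : sub | (W \in S :&: X) && [&& (x \in W :&: A)%VS, x \notin P,
                     (y \in W :&: B)%VS & y \notin P]]) => [-> | [W0]]; first by rewrite cards0.
  rewrite !inE => /andP [/andP [/and5P [_ sPW0 _ _ _] X0] /and4P [/memv_capP [xW0 _] _ /memv_capP [yW0 _] _]].
  have yPx : y \notin (P + <[x]>)%VS.
    apply: contra yP => yPx; apply: (subvP X0); rewrite memv_cap yW0 memv_cap yB andbT.
    apply: (subvP _ _ yPx); by rewrite subv_add sPA -memvE xA.
  apply: leq_trans (HM2 (P + <[x]> + <[y]>)%VS _); last by rewrite !dim_add1 // dP.
  apply: subset_leq_card; apply/subsetP => W; rewrite !inE.
  move=> /andP [/andP [/and5P [dW sPW sWK _ _] _] /and4P [/memv_capP [xW _] _ /memv_capP [yW _] _]].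
  by rewrite dW !subv_add sPW -!memvE xW yW sWK.
have HS : #|S| = #|S :&: X| + #|S :\: X| by rewrite cardsID.
rewrite HS mulnDl addnC; apply: leq_add; last exact: H2.
rewrite expnS expn1 mulnA [X in _ <= X]mulnAC leq_mul2r H1 orbT //.
Qed.

End Meet.

Section Perp.
Variable F : finFieldType.
Local Notation V := 'rV[F]_7.
Local Notation sub := {vspace V}.
Local Notation q := #|F|.

Definition dotv (u v : V) : F := (\sum_(j < 7) u 0 j * v 0 j)%R.

Lemma dotvC u v : dotv u v = dotv v u.
Proof. by apply: eq_bigr => j _; rewrite mulrC. Qed.

Lemma dotvDr u v w : dotv u (v + w)%R = (dotv u v + dotv u w)%R.
Proof. by rewrite /dotv -big_split; apply: eq_bigr => j _; rewrite !mxE mulrDr. Qed.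

Lemma dotvZr u a v : dotv u (a *: v)%R = (a * dotv u v)%R.
Proof. by rewrite /dotv mulr_sumr; apply: eq_bigr => j _; rewrite !mxE mulrCA. Qed.

Lemma dotv0r u : dotv u 0%R = 0%R.
Proof. by rewrite /dotv big1 // => j _; rewrite mxE mulr0. Qed.

Lemma dotv_sumr u I (r : seq I) (P : pred I) (G : I -> V) :
  dotv u (\sum_(i <- r | P i) G i)%R = (\sum_(i <- r | P i) dotv u (G i))%R.
Proof.
elim/big_rec2: _ => [|i x y _ IH]; first exact: dotv0r.
by rewrite dotvDr IH.
Qed.

Definition Mp (U : sub) : 'M[F]_(7, \dim U) :=
  \matrix_(j < 7, i < \dim U) (nth 0%R (vbasis U) i ord0 j).

Definition perp (U : sub) : sub := lker (linfun (mulmxr (Mp U))).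

Lemma perpP (U : sub) (v : V) :
  reflect (forall u, u \in U -> dotv v u = 0%R) (v \in perp U).
Proof.
rewrite /perp memv_ker lfunE /=.
apply: (iffP eqP) => [H u uU | H].
  rewrite (coord_vbasis uU) dotv_sumr big1 // => i _.
  rewrite dotvZr; have := congr1 (fun M : 'rV_(\dim U) => M ord0 i) H.
  rewrite !mxE => Hs; rewrite (_ : dotv v _ = 0%R) ?mulr0 //.
  by rewrite -Hs /dotv; apply: eq_bigr => j _; rewrite mxE.
apply/rowP => i; rewrite !mxE.
have := H _ (vbasis_mem (mem_nth 0%R (_ : i < size (vbasis U)))).
rewrite size_tuple => /(_ (ltn_ord i)) Hi.
by rewrite -[RHS]Hi /dotv; apply: eq_bigr => j _; rewrite mxE.
Qed.

Lemma perp_mono (U W : sub) : (U <= W)%VS -> (perp W <= perp U)%VS.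
Proof.
move=> sUW; apply/subvP => v /perpP H; apply/perpP => u uU; apply: H.
exact: (subvP sUW).
Qed.

Lemma perpD (U W : sub) : perp (U + W)%VS = (perp U :&: perp W)%VS.
Proof.
apply/vspaceP => v; rewrite memv_cap.
apply/idP/idP.
  move/perpP => H; apply/andP; split; apply/perpP => u uU; apply: H.
    exact: (subvP (addvSl U W)).
  exact: (subvP (addvSr U W)).
move=> /andP [/perpP H1 /perpP H2]; apply/perpP => u.
by case/memv_addP => a aU [b bW ->]; rewrite dotvDr H1 // H2 // addr0.
Qed.

Lemma perp_full : perp (fullv : sub) = 0%VS.
Proof.
apply/eqP; rewrite -subv0; apply/subvP => v /perpP H; rewrite memv0.
apply/eqP/rowP => j; rewrite mxE.
have := H (delta_mx ord0 j) (memvf _); rewrite /dotv (bigD1 j) //= big1.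
  by rewrite !mxE !eqxx mulr1 addr0.
by move=> k kj; rewrite !mxE (negbTE kj) andbF mulr0.
Qed.

Lemma sub_perpK (U : sub) : (U <= perp (perp U))%VS.
Proof.
apply/subvP => u uU; apply/perpP => v /perpP H; by rewrite dotvC H.
Qed.

Lemma dim_perp_ge (U : sub) : 7 <= \dim (perp U) + \dim U.
Proof.
have H : (\dim (fullv :&: perp U) + \dim (limg (linfun (mulmxr (Mp U) : V -> 'rV_(\dim U))))
           = \dim (fullv : sub))%N := limg_ker_dim _ _.
rewrite dimV capfv in H; rewrite -[X in X <= _]H leq_add2l.
apply: leq_trans (dimvS (subvf _)) _; rewrite dimvf /dim /=.
by rewrite mul1n.
Qed.

Lemma dim_perp (U : sub) : \dim (perp U) = 7 - \dim U.
Proof.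
apply/eqP; rewrite eqn_leq; apply/andP; split; last first.
  by rewrite leq_subLR addnC dim_perp_ge.
have H := dimv_sum_cap (perp U) (perp U^C).
rewrite -perpD addv_complf perp_full dimv0 addn0 in H.
have H1 := dim_perp_ge U^C; rewrite dimv_compl dimV in H1.
have H2 := dim_le7 (perp U + perp U^C)%VS.
have H3 := dim_le7 U.
lia.
Qed.

Lemma perpK (U : sub) : perp (perp U) = U.
Proof.
apply/eqP; rewrite eq_sym eqEdim sub_perpK !dim_perp.
have := dim_le7 U; lia.
Qed.

Lemma perp_inj : injective perp.
Proof. by move=> U W H; rewrite -(perpK U) H perpK. Qed.

Lemma perpI (U W : sub) : perp (U :&: W)%VS = (perp U + perp W)%VS.
Proof.
by rewrite -{1}(perpK U) -{1}(perpK W) -perpD perpK.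
Qed.

Lemma dim_perp_cap (U W : sub) :
  \dim (perp U :&: perp W)%VS + \dim U + \dim W = \dim (U :&: W)%VS + 7.
Proof.
rewrite -perpD dim_perp.
have := dimv_sum_cap U W; have := dim_le7 (U + W)%VS; lia.
Qed.

End Perp.

Section Flags.
Variable F : finFieldType.
Local Notation V := 'rV[F]_7.
Local Notation sub := {vspace V}.
Local Notation q := #|F|.
Local Notation flag := (sub * sub)%type.

Definition Dflag (f : flag) : flag := (perp f.2, perp f.1).

Lemma DflagK : involutive Dflag.
Proof. by case=> E S; rewrite /Dflag /= !perpK. Qed.

Lemma Dflag_inj : injective Dflag.
Proof. exact: inv_inj DflagK. Qed.

Lemma flagD (f : flag) : is_flag23 f -> is_flag23 (Dflag f).
Proof.
case: f => E S; rewrite /is_flag23 /is_plane /is_solid /= => /and3P [/eqP dE /eqP dS sES].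
by rewrite !dim_perp dE dS perp_mono.
Qed.

Lemma cap0_dim (U W : sub) : ((U :&: W)%VS == 0%VS) = (\dim (U :&: W)%VS == 0).
Proof. by rewrite dimv_eq0. Qed.

Lemma perp_cap0 (E S : sub) : \dim E = 3 -> \dim S = 4 ->
  ((perp S :&: perp E)%VS == 0%VS) = ((E :&: S)%VS == 0%VS).
Proof.
move=> dE dS; rewrite !cap0_dim.
have := dim_perp_cap S E; rewrite [(S :&: E)%VS]capvC dE dS => H.
have -> : \dim (perp S :&: perp E)%VS = \dim (E :&: S)%VS by lia.
by [].
Qed.

Lemma perp_cap0' (E S : sub) : \dim E = 3 -> \dim S = 4 ->
  ((perp E :&: perp S)%VS == 0%VS) = ((E :&: S)%VS == 0%VS).
Proof. by move=> dE dS; rewrite capvC perp_cap0. Qed.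

Lemma indepD (C : {set flag}) : kneser_independent C -> kneser_independent (Dflag @: C).
Proof.
case=> Hfl Hind; split.
  by move=> h /imsetP [f fC ->]; apply: flagD; apply: Hfl.
move=> h1 h2 /imsetP [f fC ->] /imsetP [g gC ->].
have := Hind f g fC gC; have := Hfl f fC; have := Hfl g gC.
rewrite /is_flag23 /is_plane /is_solid /kneser_adj /=.
move=> /and3P [/eqP dgE /eqP dgS _] /and3P [/eqP dfE /eqP dfS _].
rewrite (inj_eq Dflag_inj) perp_cap0 // perp_cap0 //.
by case: (f != g) => //=; rewrite andbC.
Qed.

Lemma card_Dflag (C : {set flag}) : #|Dflag @: C| = #|C|.
Proof. exact: card_imset Dflag_inj. Qed.

Lemma planeD_count (C : {set flag}) (P : sub) :
  #|[set h in Dflag @: C | h.1 == P]| = #|[set f in C | f.2 == perp P]|.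
Proof.
rewrite -[RHS](card_imset _ Dflag_inj); apply: eq_card => h.
apply/idP/idP.
  rewrite !inE => /andP [/imsetP [f fC ->] /eqP e]; apply/imsetP; exists f => //.
  by rewrite !inE fC /= -e perpK eqxx.
case/imsetP => f; rewrite !inE => /andP [fC /eqP e] ->.
by rewrite (imset_f _ fC) /= e perpK eqxx.
Qed.

Lemma solidD_count (C : {set flag}) (S : sub) :
  #|[set h in Dflag @: C | h.2 == S]| = #|[set f in C | f.1 == perp S]|.
Proof.
rewrite -[RHS](card_imset _ Dflag_inj); apply: eq_card => h.
apply/idP/idP.
  rewrite !inE => /andP [/imsetP [f fC ->] /eqP e]; apply/imsetP; exists f => //.
  by rewrite !inE fC /= -e perpK eqxx.
case/imsetP => f; rewrite !inE => /andP [fC /eqP e] ->.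
by rewrite (imset_f _ fC) /= e perpK eqxx.
Qed.

Definition planes_ok (C : {set flag}) :=
  forall E : sub, is_plane E -> #|[set f in C | f.1 == E]| <= q.+1.
Definition solids_ok (C : {set flag}) :=
  forall S : sub, is_solid S -> #|[set f in C | f.2 == S]| <= q.+1.

Lemma planes_okD (C : {set flag}) : solids_ok C -> planes_ok (Dflag @: C).
Proof.
move=> H P; rewrite /is_plane => /eqP dP; rewrite planeD_count; apply: H.
by rewrite /is_solid dim_perp dP.
Qed.

Lemma solids_okD (C : {set flag}) : planes_ok C -> solids_ok (Dflag @: C).
Proof.
move=> H S; rewrite /is_solid => /eqP dS; rewrite solidD_count; apply: H.
by rewrite /is_plane dim_perp dS.
Qed.

Lemma card_by_planes (C C' : {set flag}) (Pl : {set sub}) :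
  planes_ok C -> {subset C <= is_flag23 (F:=F)} -> C' \subset C ->
  (forall f, f \in C' -> f.1 \in Pl) -> #|C'| <= #|Pl| * q.+1.
Proof.
move=> HE Hfl sC' HPl.
rewrite -sum1_card (partition_big_imset fst) /=.
apply: (@leq_trans (\sum_(j in fst @: C') q.+1)).
  apply: leq_sum => E /imsetP [f fC' ->].
  rewrite sum1dep_card; apply: leq_trans (HE f.1 _).
    apply: subset_leq_card; apply/subsetP => g; rewrite !inE => /andP [gC' ->].
    by rewrite (subsetP sC') .
  by have := Hfl f (subsetP sC' f fC'); rewrite /is_flag23 => /and3P [].
rewrite sum_nat_const leq_mul2r; apply/orP; right.
apply: subset_leq_card; apply/subsetP => E /imsetP [f fC' ->]; exact: HPl.
Qed.

End Flags.

Import Num.Theory.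

Ltac nat2int := apply/eqP; rewrite -(@eqr_nat int) ?(natrM, natrD, natrX);
  rewrite ?natrB ?(natrM, natrD, natrX); try (by apply/eqP; ring);
  try (by rewrite expn_gt0 q_gt0); try (by rewrite q_gt0);
  try (by rewrite -{1}(expn1 #|_|) leq_pexp2l ?q_gt0).

Section Geo.
Variable F : finFieldType.
Local Notation V := 'rV[F]_7.
Local Notation sub := {vspace V}.
Local Notation q := #|F|.

Definition g3 := q^2 + q + 1.
Definition g4 := q^3 + q^2 + q + 1.
Definition g5 := q^4 + q^3 + q^2 + q + 1.
Definition G62 := (q^4 + q^2 + 1) * g5.
Definition G52 := (q^2 + 1) * g5.
Definition YB := q.+1 * G52 + g3 * g3 * g4.

Lemma q1_gt0 : 0 < q - 1. Proof. by rewrite subn_gt0 q_gt1. Qed.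

Lemma id_62 : (q ^ 5 - 1) * (q ^ 6 - 1) = G62 * ((q - 1) * (q ^ 2 - 1)).
Proof.
have q0 := q_gt0 F; rewrite /G62 /g5.
nat2int.
Qed.


Lemma qsq_gt1 : 1 < q ^ 2.
Proof. by rewrite (ltn_sqr 1) q_gt1. Qed.

Lemma pos12 : 0 < (q - 1) * (q ^ 2 - 1).
Proof. by rewrite muln_gt0 q1_gt0 subn_gt0 qsq_gt1. Qed.

Lemma M1_planes (U : sub) : \dim U = 1 ->
  #|[set W : sub | [&& \dim W == 3, (U <= W)%VS & (W <= fullv)%VS]]| <= G62.
Proof.
move=> dU.
have := count_sup (K := fullv) (e := 4) (m := 2) (subvf U).
rewrite dU dimV => /(_ erefl).
rewrite !big_ord_recr !big_ord0 /= !mul1n expn1 id_62 (_ : 1 + 2 = 3) //.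
by move=> H; rewrite -(leq_pmul2r pos12).
Qed.

Lemma M2_planes (U : sub) : \dim U = 2 ->
  #|[set W : sub | [&& \dim W == 3, (U <= W)%VS & (W <= fullv)%VS]]| <= g5.
Proof.
move=> dU.
have := count_sup (K := fullv) (e := 4) (m := 1) (subvf U).
rewrite dU dimV => /(_ erefl).
rewrite !big_ord_recr !big_ord0 /= !mul1n.
have -> : q ^ 5 - 1 = g5 * (q ^ 1 - 1) by rewrite /g5; nat2int.
by rewrite (_ : 2 + 1 = 3) // expn1 => H; rewrite -(leq_pmul2r q1_gt0).
Qed.

Lemma M1_solids (U : sub) : \dim U = 2 ->
  #|[set W : sub | [&& \dim W == 4, (U <= W)%VS & (W <= fullv)%VS]]| <= G52.
Proof.
move=> dU.
have := count_sup (K := fullv) (e := 3) (m := 2) (subvf U).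
rewrite dU dimV => /(_ erefl).
rewrite !big_ord_recr !big_ord0 /= !mul1n.
have -> : (q ^ 4 - 1) * (q ^ 5 - 1) = G52 * ((q ^ 1 - 1) * (q ^ 2 - 1)).
  by rewrite /G52 /g5; nat2int.
by rewrite (_ : 2 + 2 = 4) // expn1 => H; rewrite -(leq_pmul2r pos12).
Qed.

Lemma M2_solids (U : sub) : \dim U = 3 ->
  #|[set W : sub | [&& \dim W == 4, (U <= W)%VS & (W <= fullv)%VS]]| <= g4.
Proof.
move=> dU.
have := count_sup (K := fullv) (e := 3) (m := 1) (subvf U).
rewrite dU dimV => /(_ erefl).
rewrite !big_ord_recr !big_ord0 /= !mul1n.
have -> : q ^ 4 - 1 = g4 * (q ^ 1 - 1) by rewrite /g4; nat2int.
by rewrite (_ : 3 + 1 = 4) // expn1 => H; rewrite -(leq_pmul2r q1_gt0).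
Qed.

Lemma planes_meet2 (A B : sub) x a b :
  q ^ \dim (A :&: B)%VS - 1 <= (q - 1) * x -> q ^ \dim A - 1 <= (q - 1) * a ->
  q ^ \dim B - 1 <= (q - 1) * b ->
  #|[set W : sub | [&& \dim W == 3, (W :&: A != 0)%VS & (W :&: B != 0)%VS]]|
    <= x * G62 + a * b * g5.
Proof.
move=> hx ha hb.
have H := meet2P (K := fullv) (A := A) (B := B) (k := 3) (M1 := G62) (M2 := g5)
   (sub0v A) (sub0v B) (dimv0 _) M1_planes M2_planes.
have -> : [set W : sub | [&& \dim W == 3, (W :&: A != 0)%VS & (W :&: B != 0)%VS]]
   = [set W : sub | [&& \dim W == 3, (0 <= W)%VS, (W <= fullv)%VS,
                      ~~ (W :&: A <= 0)%VS & ~~ (W :&: B <= 0)%VS]].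
  by apply/setP => W; rewrite !inE sub0v subvf !subv0.
move: H; rewrite expn0 expn1.
move: (#|_|) => s.
have c0 := q1_gt0.
move: (q - 1) c0 hx ha hb => c c0 hx ha hb H.
move: (q ^ \dim (A :&: B)%VS - 1) (q ^ \dim A - 1) (q ^ \dim B - 1) hx ha hb H => u v w hx ha hb H.
rewrite -(@leq_pmul2r (c ^ 2)) ?expn_gt0 ?c0 //; apply: leq_trans H _.
rewrite mulnDl; apply: leq_add.
  apply: leq_trans (leq_mul (leq_mul hx (leqnn c)) (leqnn G62)) _; apply: eq_leq; ring.
apply: leq_trans (leq_mul (leq_mul ha hb) (leqnn g5)) _; apply: eq_leq; ring.
Qed.

Lemma solids_meet2p (p : V) (S S' : sub) : (p != 0)%R -> p \in S -> p \in S' ->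
  \dim (S :&: S')%VS <= 3 -> \dim S = 4 -> \dim S' = 4 ->
  #|[set T : sub | [&& \dim T == 4, (<[p]> <= T)%VS, ~~ (T :&: S <= <[p]>)%VS
                      & ~~ (T :&: S' <= <[p]>)%VS]]| <= YB.
Proof.
move=> p0 pS pS' dSS dS dS'.
have dp : \dim <[p]>%VS = 1 by rewrite dim_vline p0.
have H := meet2P (K := fullv) (A := S) (B := S') (k := 4) (M1 := G52) (M2 := g4)
   pS pS' dp M1_solids M2_solids.
have -> : [set T : sub | [&& \dim T == 4, (<[p]> <= T)%VS, ~~ (T :&: S <= <[p]>)%VS
                      & ~~ (T :&: S' <= <[p]>)%VS]]
   = [set W : sub | [&& \dim W == 4, (<[p]> <= W)%VS, (W <= fullv)%VS,
                      ~~ (W :&: S <= <[p]>)%VS & ~~ (W :&: S' <= <[p]>)%VS]].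
  by apply/setP => W; rewrite !inE subvf.
move: H; rewrite dS dS' expn1.
have hu : q ^ \dim (S :&: S')%VS - q <= (q ^ 2 - q) * q.+1.
  apply: (@leq_trans (q ^ 3 - q)).
    by rewrite leq_sub2r // leq_pexp2l // q_gt0.
  by apply: eq_leq; rewrite -addn1; nat2int.
have h4 : q ^ 4 - q = (q ^ 2 - q) * g3 by rewrite /g3; nat2int.
have c0 : 0 < q ^ 2 - q by rewrite subn_gt0 -{1}(expn1 q) ltn_exp2l ?q_gt1.
rewrite h4 /YB.
move: (#|_|) => s.
move: (q ^ 2 - q) c0 hu => c c0 hu.
move: (q ^ \dim (S :&: S')%VS - q) hu => u hu H.
rewrite -(@leq_pmul2r (c ^ 2)) ?expn_gt0 ?c0 //; apply: leq_trans H _.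
rewrite mulnDl; apply: leq_add.
  apply: leq_trans (leq_mul (leq_mul hu (leqnn c)) (leqnn G52)) _; apply: eq_leq; ring.
apply: eq_leq; ring.
Qed.

End Geo.

Section FlagBounds.
Variable F : finFieldType.
Local Notation V := 'rV[F]_7.
Local Notation sub := {vspace V}.
Local Notation q := #|F|.
Local Notation flag := (sub * sub)%type.

Lemma flagP (f : flag) : is_flag23 f -> [/\ \dim f.1 = 3, \dim f.2 = 4 & (f.1 <= f.2)%VS].
Proof. by rewrite /is_flag23 /is_plane /is_solid => /and3P [/eqP -> /eqP -> ->]. Qed.

Lemma nonadj (C : {set flag}) f g : kneser_independent C -> f \in C -> g \in C -> f != g ->
  ((f.1 :&: g.2)%VS != 0%VS) || ((g.1 :&: f.2)%VS != 0%VS).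
Proof.
case=> _ H fC gC fg; have := H f g fC gC; rewrite /kneser_adj fg /=.
by rewrite negb_and.
Qed.

Lemma pick_nz (U : sub) : U != 0%VS -> exists2 p : V, p \in U & (p != 0)%R.
Proof.
move=> U0; have : ~~ (U <= 0)%VS by rewrite subv0.
by case/subvPn => p pU; rewrite memv0 => p0; exists p.
Qed.

Lemma cap_lt (U W : sub) : U != W -> \dim U = \dim W -> \dim (U :&: W)%VS < \dim U.
Proof.
move=> UW dUW; rewrite ltn_neqAle dimvS ?capvSl // andbT.
apply: contra UW => /eqP e.
have e1 : (U :&: W)%VS == U by rewrite eqEdim capvSl e leqnn.
have sUW : (U <= W)%VS by rewrite -(eqP e1) capvSr.
by rewrite eqEdim sUW dUW leqnn.
Qed.

Lemma notin_line (U : sub) (x p : V) : x \in U -> (x != 0)%R -> p \notin U -> x \notin <[p]>%VS.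
Proof.
move=> xU x0 pU; apply/negP => /vlineP [k xk].
have k0 : k != 0%R by apply: contra x0 => /eqP k0; rewrite xk k0 scale0r.
case/negP: pU; have -> : p = (k^-1 *: x)%R by rewrite xk scalerA mulVf ?scale1r.
by rewrite memvZ.
Qed.

Lemma card_by_solids (C C' : {set flag}) (Sl : {set sub}) :
  solids_ok C -> {subset C <= is_flag23 (F:=F)} -> C' \subset C ->
  (forall f, f \in C' -> f.2 \in Sl) -> #|C'| <= #|Sl| * q.+1.
Proof.
move=> HS Hfl sC' HSl.
rewrite -sum1_card (partition_big_imset snd) /=.
apply: (@leq_trans (\sum_(j in snd @: C') q.+1)).
  apply: leq_sum => E /imsetP [f fC' ->].
  rewrite sum1dep_card; apply: leq_trans (HS f.2 _).
    apply: subset_leq_card; apply/subsetP => g; rewrite !inE => /andP [gC' ->].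
    by rewrite (subsetP sC').
  by have := Hfl f (subsetP sC' f fC'); rewrite /is_flag23 => /and3P [].
rewrite sum_nat_const leq_mul2r; apply/orP; right.
apply: subset_leq_card; apply/subsetP => E /imsetP [f fC' ->]; exact: HSl.
Qed.

Definition CAb := (q.+1 * G62 F + g3 F * g3 F * g5 F) * q.+1.

Lemma g3_eq : q ^ 3 - 1 = (q - 1) * g3 F.
Proof. by rewrite /g3; nat2int. Qed.
Lemma g4_eq : q ^ 4 - 1 = (q - 1) * g4 F.
Proof. by rewrite /g4; nat2int. Qed.

Lemma le_dim2 (U : sub) : \dim U <= 2 -> q ^ \dim U - 1 <= (q - 1) * q.+1.
Proof.
move=> dU; apply: (@leq_trans (q ^ 2 - 1)).
  by rewrite leq_sub2r // leq_pexp2l // q_gt0.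
by apply: eq_leq; rewrite -addn1; nat2int.
Qed.

Lemma caseA (C C' : {set flag}) : {subset C <= is_flag23 (F:=F)} -> planes_ok C ->
  C' \subset C ->
  (forall f g, f \in C' -> g \in C' -> (f.1 :&: g.1)%VS != 0%VS) -> #|C'| <= CAb.
Proof.
move=> Hfl HE sC' Hmeet.
have dpl f : f \in C' -> \dim f.1 = 3.
  by move=> fC'; have [] := flagP (Hfl f (subsetP sC' f fC')).
case: (leqP #|fst @: C'| 1) => [le1|].
  have H0 := @card_by_planes F C C' (fst @: C') HE Hfl sC' (fun f fC => imset_f fst fC).
  apply: leq_trans H0 _.
  apply: leq_trans (leq_mul le1 (leqnn _)) _; rewrite /CAb leq_mul2r; apply/orP; right.
  apply: leq_trans (leq_addr _ _); rewrite muln_gt0 /=.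
  by rewrite /G62 /g5 muln_gt0 !addn1.
case/card_gt1P => E0 [E1 [/imsetP [f0 f0C ->] /imsetP [f1 f1C ->] ne]].
set M := [set W : sub | [&& \dim W == 3, (W :&: f0.1 != 0)%VS & (W :&: f1.1 != 0)%VS]].
apply: leq_trans (card_by_planes (Pl := M) HE Hfl sC' _) _.
  by move=> f fC; rewrite inE dpl // eqxx !Hmeet.
rewrite /CAb leq_mul2r; apply/orP; right.
apply: planes_meet2.
- apply: le_dim2; have := cap_lt ne; rewrite dpl // dpl // => /(_ erefl); lia.
- by rewrite dpl // g3_eq.
- by rewrite dpl // g3_eq.
Qed.

End FlagBounds.

Section FlagBounds2.
Variable F : finFieldType.
Local Notation V := 'rV[F]_7.
Local Notation sub := {vspace V}.
Local Notation q := #|F|.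
Local Notation flag := (sub * sub)%type.

Variable C : {set flag}.
Hypothesis Hind : kneser_independent C.
Hypothesis HE : planes_ok C.
Hypothesis HS : solids_ok C.

Let Hfl : {subset C <= is_flag23 (F:=F)}. Proof. by case: Hind. Qed.

Lemma dimE f : f \in C -> \dim f.1 = 3.
Proof. by move=> fC; have [] := flagP (Hfl fC). Qed.
Lemma dimS f : f \in C -> \dim f.2 = 4.
Proof. by move=> fC; have [] := flagP (Hfl fC). Qed.
Lemma subES f : f \in C -> (f.1 <= f.2)%VS.
Proof. by move=> fC; have [] := flagP (Hfl fC). Qed.

Lemma Bp_bound (p : V) : (p != 0)%R ->
  #|[set f in C | (p \in f.2) && (p \notin f.1)]| <= YB F * q.+1.
Proof.
move=> p0; set B' := [set f in C | _].
have sB' : B' \subset C by apply/subsetP => f; rewrite inE => /andP [].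
have key : forall f h, f \in B' -> h \in B' -> ~~ (h.2 :&: f.2 <= <[p]>)%VS.
  move=> f h; rewrite !inE => /andP [fC /andP [pf2 pf1]] /andP [hC /andP [ph2 ph1]].
  case: (eqVneq f h) => [<-|fh].
    rewrite capvv; apply/negP => /dimvS; rewrite dimS // dim_vline p0; by [].
  case/orP: (nonadj Hind fC hC fh) => /pick_nz [x /memv_capP [x1 x2] x0].
    apply/subvPn; exists x; last exact: notin_line x1 x0 pf1.
    by rewrite memv_cap x2 (subvP (subES fC)).
  apply/subvPn; exists x; last exact: notin_line x1 x0 ph1.
  by rewrite memv_cap x2 (subvP (subES hC)).
case: (leqP #|snd @: B'| 1) => [le1|].
  have H0 := @card_by_solids F C B' (snd @: B') HS Hfl sB' (fun f fC => imset_f snd fC).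
  apply: leq_trans H0 _.
  apply: leq_trans (leq_mul le1 (leqnn _)) _; rewrite leq_mul2r; apply/orP; right.
  apply: leq_trans (leq_addr _ _); rewrite muln_gt0 /=.
  by rewrite /G52 /g5 muln_gt0 !addn1.
case/card_gt1P => S0 [S1 [/imsetP [f0 f0B ->] /imsetP [f1 f1B ->] ne]].
set M := [set T : sub | [&& \dim T == 4, (<[p]> <= T)%VS, ~~ (T :&: f0.2 <= <[p]>)%VS
                      & ~~ (T :&: f1.2 <= <[p]>)%VS]].
have f0C : f0 \in C by apply: (subsetP sB').
have f1C : f1 \in C by apply: (subsetP sB').
apply: leq_trans (card_by_solids (Sl := M) HS Hfl sB' _) _.
  move=> f fB; have fC : f \in C by apply: (subsetP sB').
  rewrite inE dimS // eqxx -memvE (key _ _ f0B fB) (key _ _ f1B fB) !andbT.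
  by move: fB; rewrite inE => /andP [_ /andP []].
rewrite leq_mul2r; apply/orP; right.
move: f0B f1B; rewrite !inE => /andP [_ /andP [p0S _]] /andP [_ /andP [p1S _]].
apply: solids_meet2p => //; try exact: dimS.
have := cap_lt ne; rewrite !dimS // => /(_ erefl); lia.
Qed.

Definition Bset (E : sub) := [set g in C | [exists p : V, [&& p \in E, (p != 0)%R, p \in g.2 & p \notin g.1]]].

Definition BB := g3 F * (YB F * q.+1).

Lemma Bset_bound (E : sub) : \dim E = 3 -> #|Bset E| <= BB.
Proof.
move=> dE.
have H := @dcount_le _ _ (Bset E) (fun g (p : V) => [&& p \in E, (p != 0)%R, p \in g.2 & p \notin g.1])
   (q - 1) (fun p => ((p \in E) && (p != 0)%R) * (YB F * q.+1)).
have : #|Bset E| * (q - 1) <= (q - 1) * BB.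
  apply: leq_trans (H _ _) _.
  - move=> g; rewrite inE => /andP [gC /existsP [p0 /and4P [p0E p00 p02 p01]]].
    have -> : q - 1 = #|(fun k : F => (k *: p0)%R) @: [set k : F | k != 0%R]|.
      rewrite card_imset; last first.
        move=> k1 k2 /eqP; rewrite -subr_eq0 -scalerBl scaler_eq0 (negbTE p00) orbF subr_eq0.
        by move/eqP.
      rewrite (_ : [set k : F | k != 0%R] = [set~ 0%R]); last by apply/setP => k; rewrite !inE.
      by rewrite cardsC1 subn1.
    apply: subset_leq_card; apply/subsetP => x /imsetP [k]; rewrite inE => k0 ->.
    rewrite inE (memvZ _ p0E) scaler_eq0 negb_or k0 p00 (memvZ _ p02) /=.
    apply: contra p01 => kp; have -> : p0 = (k^-1 *: (k *: p0))%R by rewrite scalerA mulVf ?scale1r.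
    exact: memvZ.
  - move=> p; case: (boolP ((p \in E) && (p != 0)%R)) => [/andP [pE p0]|Hp]; last first.
      rewrite mul0n leqn0 cards_eq0; apply/eqP/setP => g; rewrite !inE.
      apply/negP => /andP [_ /and4P [pE p0 _ _]]; case/negP: Hp; by rewrite pE p0.
    rewrite mul1n; apply: leq_trans (Bp_bound p0).
    apply: subset_leq_card; apply/subsetP => g; rewrite !inE.
    by move=> /andP [/andP [gC _] /and4P [_ _ -> ->]]; rewrite gC.
  rewrite sum_cond_const.
  have -> : #|[set b : V | (b \in E) && (b != 0)%R]| = q ^ 3 - 1.
    have := card_diff (sub0v E); rewrite dimv0 expn0 dE => <-.
    by apply: eq_card => x; rewrite !inE memv0.
  by rewrite (@g3_eq F) /BB -mulnA.
by rewrite mulnC leq_pmul2l ?q1_gt0.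
Qed.

Definition IIIb := q.+1 * G62 F + g3 F * g4 F * g5 F.
Definition XB := (g3 F * g3 F * g5 F) * q.+1 + BB + IIIb * q.+1.

Lemma Ta_bound f0 f1 : f0 \in C -> f1 \in C -> (f0.1 :&: f1.1)%VS == 0%VS ->
  #|[set g in C | (g.1 :&: f0.1)%VS != 0%VS]| <= XB.
Proof.
move=> f0C f1C d01.
set X1 := [set g in C | ((g.1 :&: f0.1)%VS != 0%VS) && ((g.1 :&: f1.1)%VS != 0%VS)].
set X3 := [set g in C | ((g.1 :&: f0.1)%VS != 0%VS) && ((g.1 :&: f1.2)%VS != 0%VS)].
have cover : [set g in C | (g.1 :&: f0.1)%VS != 0%VS] \subset X1 :|: Bset f1.1 :|: X3.
  apply/subsetP => g; rewrite inE => /andP [gC g0].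
  have gf1 : g != f1.
    by apply: contraNneq g0 => ->; rewrite capvC.
  rewrite !inE gC g0 /=.
  case/orP: (nonadj Hind gC f1C gf1) => [->|]; first by rewrite orbT.
  case: (boolP ((g.1 :&: f1.1)%VS != 0%VS)) => [_ _|]; first by [].
  rewrite negbK => /eqP g11.
  move=> /pick_nz [p /memv_capP [p11 p2] p0]; apply/orP; left; apply/orP; right.
  apply/existsP; exists p; rewrite p11 p0 p2 /=.
  apply/negP => p1.
  have : p \in (g.1 :&: f1.1)%VS by rewrite memv_cap p1 p11.
  by rewrite g11 memv0 (negbTE p0).
apply: leq_trans (subset_leq_card cover) _.
rewrite /XB; apply: leq_trans (leq_card_setU _ _) _.
apply: leq_add; last first.
  apply: leq_trans (card_by_planes (Pl := [set W : sub | [&& \dim W == 3,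
      (W :&: f0.1 != 0)%VS & (W :&: f1.2 != 0)%VS]]) HE Hfl _ _) _.
  - by apply/subsetP => g; rewrite inE => /andP [].
  - by move=> g; rewrite !inE => /andP [gC /andP [-> ->]]; rewrite dimE.
  rewrite leq_mul2r; apply/orP; right; apply: planes_meet2.
  - apply: le_dim2.
    have H1 := dimv_sum_cap f0.1 f1.1.
    rewrite (eqP d01) dimv0 addn0 !dimE // in H1.
    case: (leqP (\dim (f0.1 :&: f1.2)%VS) 2) => // H2.
    have e : (f0.1 :&: f1.2)%VS == f0.1 by rewrite eqEdim capvSl dimE //.
    have s : (f0.1 + f1.1 <= f1.2)%VS by rewrite subv_add -(eqP e) capvSr subES.
    by have := dimvS s; rewrite H1 dimS.
  - by rewrite dimE // g3_eq.
  - by rewrite dimS // g4_eq.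
apply: leq_trans (leq_card_setU _ _) _.
apply: leq_add; last exact: Bset_bound (dimE f1C).
apply: leq_trans (card_by_planes (Pl := [set W : sub | [&& \dim W == 3,
    (W :&: f0.1 != 0)%VS & (W :&: f1.1 != 0)%VS]]) HE Hfl _ _) _.
- by apply/subsetP => g; rewrite inE => /andP [].
- by move=> g; rewrite !inE => /andP [gC /andP [-> ->]]; rewrite dimE.
rewrite leq_mul2r; apply/orP; right.
have := planes_meet2 (A := f0.1) (B := f1.1) (x := 0) (a := g3 F) (b := g3 F).
rewrite (eqP d01) dimv0 expn0 subnn !dimE // g3_eq => /(_ isT (leqnn _) (leqnn _)).
by rewrite mul0n add0n.
Qed.

End FlagBounds2.

Section Main.
Variable F : finFieldType.
Local Notation V := 'rV[F]_7.
Local Notation sub := {vspace V}.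
Local Notation q := #|F|.
Local Notation flag := (sub * sub)%type.

Variable C : {set flag}.
Hypothesis Hind : kneser_independent C.
Hypothesis HE : planes_ok C.
Hypothesis HS : solids_ok C.

Let Hfl : {subset C <= is_flag23 (F:=F)}. Proof. by case: Hind. Qed.
Let DC := (@Dflag F) @: C.
Let HindD : kneser_independent DC := indepD Hind.
Let HED : planes_ok DC := planes_okD HS.
Let HSD : solids_ok DC := solids_okD HE.
Let HflD : {subset DC <= is_flag23 (F:=F)}. Proof. by case: HindD. Qed.

Lemma card_pre (X : {set flag}) (Y : {set flag}) :
  (forall g, g \in X -> Dflag g \in Y) -> #|X| <= #|Y|.
Proof.
move=> H; rewrite -(card_imset _ (@Dflag_inj F)); apply: subset_leq_card.
by apply/subsetP => h /imsetP [g gX ->]; apply: H.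
Qed.

Lemma main_case1 f0 f1 f2 : f0 \in C -> f1 \in C -> f2 \in C ->
  (f0.1 :&: f1.1)%VS == 0%VS -> (perp f0.2 :&: perp f2.2)%VS == 0%VS ->
  #|C| <= XB F + XB F + BB F + BB F.
Proof.
move=> f0C f1C f2C h1 h2.
set Ta := [set g in C | (g.1 :&: f0.1)%VS != 0%VS].
set Tc := [set g in C | (perp g.2 :&: perp f0.2)%VS != 0%VS].
set As := [set g in C | [exists p : V, [&& p \in perp f0.2, (p != 0)%R, p \in perp g.1
                                            & p \notin perp g.2]]].
have cover : C \subset Ta :|: Tc :|: Bset C f0.1 :|: As.
  apply/subsetP => g gC; rewrite !inE gC /=.
  case: (boolP ((g.1 :&: f0.1)%VS != 0%VS)) => //= /negPn /eqP g0.
  case: (boolP ((perp g.2 :&: perp f0.2)%VS != 0%VS)) => //= /negPn /eqP g2.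
  have gf0 : g != f0.
    apply/eqP => e; move: g0; rewrite e capvv => /eqP; by rewrite -dimv_eq0 (dimE Hind f0C).
  case/orP: (nonadj Hind gC f0C gf0) => [H|H].
    apply/orP; right; apply/existsP.
    have : (perp g.1 :&: perp f0.2)%VS != 0%VS.
      by rewrite perp_cap0' ?(dimE Hind gC) ?(dimS Hind f0C).
    case/pick_nz => p /memv_capP [p1 p2] p0; exists p; rewrite p2 p0 p1 /=.
    apply/negP => pg2; have : p \in (perp g.2 :&: perp f0.2)%VS by rewrite memv_cap pg2 p2.
    by rewrite g2 memv0 (negbTE p0).
  apply/orP; left; apply/existsP.
  case/pick_nz: H => p /memv_capP [p1 p2] p0; exists p; rewrite p1 p0 p2 /=.
  apply/negP => pg1; have : p \in (g.1 :&: f0.1)%VS by rewrite memv_cap pg1 p1.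
  by rewrite g0 memv0 (negbTE p0).
apply: leq_trans (subset_leq_card cover) _.
apply: leq_trans (leq_card_setU _ _) _; apply: leq_add; last first.
  have dp : \dim (perp f0.2) = 3 by rewrite dim_perp (dimS Hind f0C).
  apply: leq_trans _ (Bset_bound HindD HSD dp).
  apply: card_pre => g; rewrite inE => /andP [gC /existsP [p /and4P [pf p0 pg1 pg2]]].
  rewrite /Bset inE (imset_f _ gC) /=; apply/existsP; exists p; by rewrite pf p0 pg1 pg2.
apply: leq_trans (leq_card_setU _ _) _; apply: leq_add; last first.
  exact (Bset_bound Hind HS (dimE Hind f0C)).
apply: leq_trans (leq_card_setU _ _) _; apply: leq_add.
  exact (Ta_bound Hind HE HS f0C f1C h1).
have D0 : Dflag f0 \in DC by rewrite imset_f.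
have D2 : Dflag f2 \in DC by rewrite imset_f.
apply: leq_trans _ (Ta_bound HindD HED HSD D0 D2 h2).
apply: card_pre => g; rewrite !inE => /andP [gC H]; by rewrite (imset_f _ gC).
Qed.

Lemma main_case2 : (forall f0, f0 \in C -> ~~ ([exists g in C, (f0.1 :&: g.1)%VS == 0%VS]
                     && [exists g in C, (perp f0.2 :&: perp g.2)%VS == 0%VS])) ->
  #|C| <= CAb F + CAb F.
Proof.
move=> H.
set NP := [set f in C | ~~ [exists g in C, (f.1 :&: g.1)%VS == 0%VS]].
set NQ := [set f in C | ~~ [exists g in C, (perp f.2 :&: perp g.2)%VS == 0%VS]].
have cover : C \subset NP :|: NQ.
  apply/subsetP => f fC; rewrite !inE fC /=; have := H f fC; by rewrite negb_and.
apply: leq_trans (subset_leq_card cover) _.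
apply: leq_trans (leq_card_setU _ _) _; apply: leq_add.
  apply: caseA Hfl HE _ _; first by apply/subsetP => f; rewrite inE => /andP [].
  move=> f g; rewrite !inE => /andP [fC nf] /andP [gC _].
  by apply: contra nf => e; apply/existsP; exists g; rewrite gC.
rewrite -(card_imset _ (@Dflag_inj F)).
apply: caseA HflD HED _ _.
  by apply/subsetP => h /imsetP [f]; rewrite inE => /andP [fC _] ->; rewrite imset_f.
move=> h1 h2 /imsetP [f]; rewrite inE => /andP [fC nf] -> /imsetP [g]; rewrite inE => /andP [gC _] ->.
by apply: contra nf => e; apply/existsP; exists g; rewrite gC.
Qed.

Lemma main_bound : #|C| <= maxn (XB F + XB F + BB F + BB F) (CAb F + CAb F).
Proof.
case: (boolP [exists f0 in C, [exists g in C, (f0.1 :&: g.1)%VS == 0%VS]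
                     && [exists g in C, (perp f0.2 :&: perp g.2)%VS == 0%VS]]).
  case/existsP => f0 /andP [f0C /andP [/existsP [f1 /andP [f1C h1]] /existsP [f2 /andP [f2C h2]]]].
  by apply: leq_trans (main_case1 f0C f1C f2C h1 h2) _; rewrite leq_maxl.
move=> H; apply: leq_trans (main_case2 _) _; last by rewrite leq_maxr.
move=> f0 f0C; apply: contra H => e; apply/existsP; exists f0; by rewrite f0C.
Qed.

End Main.

Lemma pow_step (q k : nat) : 7 <= q -> 7 * q ^ k <= q ^ k.+1.
Proof. by move=> h; rewrite expnS leq_mul2r h orbT. Qed.

Lemma num1 (q : nat) : 7 <= q ->
  12 * q ^ 10 + 52 * q ^ 9 + 128 * q ^ 8 + 230 * q ^ 7 + 322 * q ^ 6 + 362 * q ^ 5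
  + 328 * q ^ 4 + 240 * q ^ 3 + 138 * q ^ 2 + 58 * q + 14 <=
  24 * q ^ 10 + 79 * q ^ 9 + 155 * q ^ 8 + 210 * q ^ 7 + 216 * q ^ 6
          + 187 * q ^ 5 + 140 * q ^ 4 + 93 * q ^ 3 + 51 * q ^ 2 + 22 * q + 5.
Proof.
move=> h.
have h0 := @pow_step q 0 h; have h1 := @pow_step q 1 h; have h2 := @pow_step q 2 h.
have h3 := @pow_step q 3 h; have h4 := @pow_step q 4 h; have h5 := @pow_step q 5 h.
have h6 := @pow_step q 6 h; have h7 := @pow_step q 7 h; have h8 := @pow_step q 8 h.
have h9 := @pow_step q 9 h.
rewrite expn0 expn1 in h0 h1.
move: (q ^ 10) (q ^ 9) (q ^ 8) (q ^ 7) (q ^ 6) (q ^ 5) (q ^ 4) (q ^ 3) (q ^ 2) h0 h1 h2 h3 h4 h5 h6 h7 h8 h9.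
move=> m10 m9 m8 m7 m6 m5 m4 m3 m2 *.
lia.
Qed.

Lemma num2 (q : nat) :
  2 * q ^ 10 + 8 * q ^ 9 + 18 * q ^ 8 + 32 * q ^ 7 + 46 * q ^ 6 + 54 * q ^ 5
  + 52 * q ^ 4 + 42 * q ^ 3 + 28 * q ^ 2 + 14 * q + 4 <=
  24 * q ^ 10 + 79 * q ^ 9 + 155 * q ^ 8 + 210 * q ^ 7 + 216 * q ^ 6
          + 187 * q ^ 5 + 140 * q ^ 4 + 93 * q ^ 3 + 51 * q ^ 2 + 22 * q + 5.
Proof.
move: (q ^ 10) (q ^ 9) (q ^ 8) (q ^ 7) (q ^ 6) (q ^ 5) (q ^ 4) (q ^ 3) (q ^ 2).
move=> m10 m9 m8 m7 m6 m5 m4 m3 m2.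
lia.
Qed.

Lemma XB_poly (F : finFieldType) : XB F + XB F + BB F + BB F =
  12 * #|F| ^ 10 + 52 * #|F| ^ 9 + 128 * #|F| ^ 8 + 230 * #|F| ^ 7 + 322 * #|F| ^ 6
  + 362 * #|F| ^ 5 + 328 * #|F| ^ 4 + 240 * #|F| ^ 3 + 138 * #|F| ^ 2 + 58 * #|F| + 14.
Proof.
rewrite /XB /BB /IIIb /YB /G62 /G52 /g3 /g4 /g5.
move: #|F| => q; ring.
Qed.

Lemma CA_poly (F : finFieldType) : CAb F + CAb F =
  2 * #|F| ^ 10 + 8 * #|F| ^ 9 + 18 * #|F| ^ 8 + 32 * #|F| ^ 7 + 46 * #|F| ^ 6
  + 54 * #|F| ^ 5 + 52 * #|F| ^ 4 + 42 * #|F| ^ 3 + 28 * #|F| ^ 2 + 14 * #|F| + 4.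
Proof.
rewrite /CAb /G62 /g3 /g5.
move: #|F| => q; ring.
Qed.

Theorem proposition4p6 (F : finFieldType) (C : {set PGsub F * PGsub F}) :
  let q := #|F| in
  (7 <= q)%N ->
  kneser_independent C ->
  (forall E : PGsub F, is_plane E -> (#|[set f in C | f.1 == E]| <= q.+1)%N) ->
  (forall S : PGsub F, is_solid S -> (#|[set f in C | f.2 == S]| <= q.+1)%N) ->
  (#|C| <= 24 * q ^ 10 + 79 * q ^ 9 + 155 * q ^ 8 + 210 * q ^ 7 + 216 * q ^ 6
          + 187 * q ^ 5 + 140 * q ^ 4 + 93 * q ^ 3 + 51 * q ^ 2 + 22 * q + 5)%N.
Proof.
move=> q h7 Hind HE HS.
apply: leq_trans (main_bound Hind HE HS) _.
rewrite geq_max; apply/andP; split.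
  by rewrite XB_poly; exact: num1.
by rewrite CA_poly; exact: num2.
Qed.
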